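(* For positive integers $i$ and $k$, let $$c_k(i)=\frac{i+3k}{i+k}\binom{i+k}{2k}-\binom{i}{k}.$$ Then $c_k(i)\geq0$ for all $i\ge1$ and $k\geq1$.
   Context: Ordinary binomial coefficients, with $\binom{n}{m}=0$ when $m<0$ or $m>n$. *)

(* Defs.v *)
From mathcomp Require Import all_boot all_order all_algebra.
Set Implicit Arguments. Unset Strict Implicit. Unset Printing Implicit Defensive.
Import Order.TTheory GRing.Theory Num.Theory.
Local Open Scope ring_scope.

Definition c (k i : nat) : rat :=
  ((i + 3 * k)%N%:R / (i + k)%N%:R) * 'C(i + k, 2 * k)%:R - 'C(i, k)%:R.

(* Main.v *)
Require Import Defs.
From mathcomp Require Import all_boot all_order all_algebra.
Import Order.TTheory GRing.Theory Num.Theory.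
Local Open Scope ring_scope.

Lemma binle (i k : nat) : ('C(i, k) <= 'C(i + k, 2 * k))%N.
Proof.
case: (leqP k i) => h; last by rewrite bin_small.
rewrite -(bin_sub h).
have h2 : (2 * k <= i + k)%N by rewrite mul2n -addnn leq_add2r.
rewrite -(bin_sub h2).
have -> : (i + k - 2 * k = i - k)%N by rewrite mul2n -addnn subnDr.
by apply: leq_bin2l; rewrite leq_addr.
Qed.

Theorem lemma3 (i k : nat) (hi : (1 <= i)%N) (hk : (1 <= k)%N) : 0 <= c k i.
Proof.
rewrite /c subr_ge0.
have hb : ('C(i, k)%:R : rat) <= 'C(i + k, 2 * k)%:R by rewrite ler_nat binle.
apply: (le_trans hb).
rewrite -[X in X <= _]mul1r ler_wpM2r //.
have hp : (0 : rat) < (i + k)%N%:R by rewrite ltr0n addn_gt0 hi.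
rewrite ler_pdivlMr // mul1r ler_nat leq_add2l.
by rewrite leq_pmull.
Qed.
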